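(* There exists a $(5,1,6)$ strategy.
   Context: The GKS game with parameter $n$ (a positive integer). A strategy pair $(S,T)$ consists of a function $S$ assigning a bit in $\{0,1\}$ to every sequence $\pi_1\pi_2\ldots\pi_i$ of distinct elements of $[n]=\{1,\dots,n\}$ with $1\le i\le n-1$, and a function $T:\{0,1\}^n\to 2^{[n]}$. For a permutation $\pi=\pi_1\ldots\pi_n$ of $[n]$ and a bit $b$, the final array $A_{\rm final}\in\{0,1\}^n$ is defined by $A_{\rm final}[\pi_i]=S(\pi_1\ldots\pi_i)$ for $1\le i\le n-1$ and $A_{\rm final}[\pi_n]=b$. The pair $(S,T)$ is a $(k,n)$ strategy if for every permutation $\pi$ of $[n]$ and every bit $b$ we have $\pi_n\in T(A_{\rm final})$, and moreover $|T(\sigma)|\le k$ for every $\sigma\in\{0,1\}^n$. A $(k,k_A,n)$ strategy is a $(k,n)$ strategy $(S,T)$ in which $S$ is additionally defined on all full permutations $\pi_1\ldots\pi_n$ of $[n]$ (''Alice-mode''), such that, letting $\mathcal{O}_A$ be the set of all arrays $A\in\{0,1\}^n$ with $A[\pi_i]=S(\pi_1\ldots\pi_i)$ for all $1\le i\le n$, for some permutation $\pi$ of $[n]$, we have $|T(\sigma)|\le k_A$ for every $\sigma\in\mathcal{O}_A$. *)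

(* Defs.v *)
From mathcomp Require Import all_boot.
Set Implicit Arguments. Unset Strict Implicit. Unset Printing Implicit Defensive.

(* Elements of [n] = {1..n} are represented by 'I_n = {0..n-1}.
   A sequence pi_1 ... pi_i of distinct elements is a seq 'I_n; a permutation
   of [n] is a duplicate-free seq of length n.  The bit-assigning function S is
   given on all sequences (only its values on the relevant sequences matter). *)

Definition is_perm_seq (n : nat) (s : seq 'I_n) : bool := uniq s && (size s == n).

(* The final array for permutation s and bit b:
   A[pi_i] = S(pi_1..pi_i) for i <= n-1 (pi_i = j iff index j s = i-1),
   A[pi_n] = b. *)
Definition final_array (n : nat) (S : seq 'I_n -> bool) (s : seq 'I_n) (b : bool)
  : {ffun 'I_n -> bool} :=
  [ffun j => if index j s == n.-1 then b else S (take (index j s).+1 s)].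

Definition alice_array (n : nat) (S : seq 'I_n -> bool) (s : seq 'I_n)
  : {ffun 'I_n -> bool} :=
  [ffun j => S (take (index j s).+1 s)].

Definition kn_strategy (k n : nat) (S : seq 'I_n -> bool)
    (T : {ffun 'I_n -> bool} -> {set 'I_n}) : Prop :=
  (forall (s : seq 'I_n) (b : bool), is_perm_seq s ->
     forall j : 'I_n, index j s = n.-1 -> j \in T (final_array S s b))
  /\ (forall sigma : {ffun 'I_n -> bool}, #|T sigma| <= k).

Definition in_OA (n : nat) (S : seq 'I_n -> bool) (sigma : {ffun 'I_n -> bool}) : Prop :=
  exists s : seq 'I_n, is_perm_seq s /\ sigma = alice_array S s.

Definition kkn_strategy (k kA n : nat) (S : seq 'I_n -> bool)
    (T : {ffun 'I_n -> bool} -> {set 'I_n}) : Prop :=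
  kn_strategy k S T /\
  (forall sigma : {ffun 'I_n -> bool}, in_OA S sigma -> #|T sigma| <= kA).

(* Main.v *)
Require Import Defs.
From mathcomp Require Import all_boot.
Set Implicit Arguments. Unset Strict Implicit. Unset Printing Implicit Defensive.

Definition ones_tbl : seq (seq nat) := [:: [:: 0]; [:: 0; 1]; [:: 0; 1; 2]; [:: 0; 1; 2; 3]; [:: 0; 1; 2; 3; 4]; [:: 0; 1; 2; 3; 4; 5]; [:: 0; 1; 2; 4]; [:: 0; 1; 2; 4; 3]; [:: 0; 1; 2; 4; 3; 5]; [:: 0; 1; 2; 5; 3]; [:: 0; 1; 2; 5; 4]; [:: 0; 1; 3]; [:: 0; 1; 3; 2]; [:: 0; 1; 3; 2; 4]; [:: 0; 1; 3; 2; 4; 5]; [:: 0; 1; 3; 4]; [:: 0; 1; 3; 4; 2]; [:: 0; 1; 3; 4; 2; 5]; [:: 0; 1; 3; 5; 2]; [:: 0; 1; 3; 5; 4]; [:: 0; 1; 4]; [:: 0; 1; 4; 2]; [:: 0; 1; 4; 2; 3]; [:: 0; 1; 4; 2; 3; 5]; [:: 0; 1; 4; 3]; [:: 0; 1; 4; 3; 2]; [:: 0; 1; 4; 3; 2; 5]; [:: 0; 1; 4; 5; 2]; [:: 0; 1; 4; 5; 3]; [:: 0; 1; 5; 2]; [:: 0; 1; 5; 2; 3]; [:: 0; 1; 5; 2; 4]; [:: 0; 1; 5; 3]; [:: 0; 1; 5; 3; 2]; [:: 0; 1; 5; 3; 4]; [:: 0; 1; 5; 4]; [:: 0; 1; 5;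 4; 2]; [:: 0; 1; 5; 4; 3]; [:: 0; 2]; [:: 0; 2; 1]; [:: 0; 2; 1; 3]; [:: 0; 2; 1; 3; 4]; [:: 0; 2; 1; 3; 4; 5]; [:: 0; 2; 1; 4]; [:: 0; 2; 1; 4; 3]; [:: 0; 2; 1; 4; 3; 5]; [:: 0; 2; 1; 5; 3]; [:: 0; 2; 1; 5; 4]; [:: 0; 2; 3]; [:: 0; 2; 3; 1]; [:: 0; 2; 3; 1; 4]; [:: 0; 2; 3; 1; 4; 5]; [:: 0; 2; 3; 4]; [:: 0; 2; 3; 4; 1]; [:: 0; 2; 3; 4; 1; 5]; [:: 0; 2; 3; 5; 1]; [:: 0; 2; 3; 5; 4]; [:: 0; 2; 4]; [:: 0; 2; 4; 1]; [:: 0; 2; 4; 1; 3]; [:: 0; 2; 4; 1; 3; 5]; [:: 0; 2; 4; 3]; [:: 0; 2; 4; 3; 1]; [:: 0; 2; 4; 3; 1; 5]; [:: 0; 2; 4; 5; 1]; [:: 0; 2; 4; 5; 3]; [:: 0; 2; 5; 1]; [:: 0; 2; 5; 1; 3]; [:: 0; 2; 5; 1; 4]; [:: 0; 2; 5; 3]; [:: 0; 2; 5; 3; 1]; [:: 0; 2; 5; 3; 4]; [:: 0; 2; 5; 4]; [:: 0; 2; 5; 4; 1]; [:: 0; 2; 5; 4; 3]; [:: 0; 3]; [:: 0; 3; 1; 2; 4]; [:: 0; 3; 1; 2; 5]; [:: 0; 3; 1; 4]; [:: 0; 3; 1; 4; 5]; [:: 0; 3; 1; 4; 5; 2]; [::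 0; 3; 1; 5]; [:: 0; 3; 1; 5; 4]; [:: 0; 3; 1; 5; 4; 2]; [:: 0; 3; 2; 1; 4]; [:: 0; 3; 2; 1; 5]; [:: 0; 3; 2; 4]; [:: 0; 3; 2; 4; 5]; [:: 0; 3; 2; 4; 5; 1]; [:: 0; 3; 2; 5]; [:: 0; 3; 2; 5; 4]; [:: 0; 3; 2; 5; 4; 1]; [:: 0; 3; 4]; [:: 0; 3; 4; 1; 5]; [:: 0; 3; 4; 1; 5; 2]; [:: 0; 3; 4; 2; 5]; [:: 0; 3; 4; 2; 5; 1]; [:: 0; 3; 4; 5; 1]; [:: 0; 3; 4; 5; 2]; [:: 0; 3; 5; 1]; [:: 0; 3; 5; 1; 2]; [:: 0; 3; 5; 1; 4]; [:: 0; 3; 5; 2]; [:: 0; 3; 5; 2; 1]; [:: 0; 3; 5; 2; 4]; [:: 0; 3; 5; 4]; [:: 0; 3; 5; 4; 1]; [:: 0; 3; 5; 4; 2]; [:: 0; 4; 1; 2; 3; 5]; [:: 0; 4; 1; 2; 5; 3]; [:: 0; 4; 1; 3; 2; 5]; [:: 0; 4; 1; 3; 5; 2]; [:: 0; 4; 1; 5; 2; 3]; [:: 0; 4; 1; 5; 3; 2]; [:: 0; 4; 2; 1; 3; 5]; [:: 0; 4; 2; 1; 5; 3]; [:: 0; 4; 2; 3; 1; 5]; [:: 0; 4; 2; 3; 5; 1]; [:: 0; 4; 2; 5; 1; 3]; [:: 0; 4; 2; 5; 3; 1]; [:: 0; 4; 3; 1; 2; 5]; [:: 0; 4; 3; 1;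 5; 2]; [:: 0; 4; 3; 2; 1; 5]; [:: 0; 4; 3; 2; 5; 1]; [:: 0; 4; 3; 5; 1; 2]; [:: 0; 4; 3; 5; 2; 1]; [:: 0; 4; 5; 1; 2; 3]; [:: 0; 4; 5; 1; 3; 2]; [:: 0; 4; 5; 2; 1; 3]; [:: 0; 4; 5; 2; 3; 1]; [:: 0; 4; 5; 3; 1; 2]; [:: 0; 4; 5; 3; 2; 1]; [:: 0; 5; 1]; [:: 0; 5; 1; 2]; [:: 0; 5; 1; 2; 3]; [:: 0; 5; 1; 2; 4]; [:: 0; 5; 1; 3]; [:: 0; 5; 1; 3; 2]; [:: 0; 5; 1; 3; 4]; [:: 0; 5; 1; 4]; [:: 0; 5; 1; 4; 2]; [:: 0; 5; 1; 4; 3]; [:: 0; 5; 2]; [:: 0; 5; 2; 1]; [:: 0; 5; 2; 1; 3]; [:: 0; 5; 2; 1; 4]; [:: 0; 5; 2; 3]; [:: 0; 5; 2; 3; 1]; [:: 0; 5; 2; 3; 4]; [:: 0; 5; 2; 4]; [:: 0; 5; 2; 4; 1]; [:: 0; 5; 2; 4; 3]; [:: 0; 5; 3]; [:: 0; 5; 3; 1]; [:: 0; 5; 3; 1; 2]; [:: 0; 5; 3; 1; 4]; [:: 0; 5; 3; 2]; [:: 0; 5; 3; 2; 1]; [:: 0; 5; 3; 2; 4]; [:: 0; 5; 3; 4]; [:: 0; 5; 3; 4; 1]; [:: 0; 5; 3; 4; 2]; [:: 0; 5; 4; 1; 2; 3]; [:: 0; 5; 4; 1; 3; 2]; [:: 0;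 5; 4; 2; 1; 3]; [:: 0; 5; 4; 2; 3; 1]; [:: 0; 5; 4; 3; 1; 2]; [:: 0; 5; 4; 3; 2; 1]; [:: 1]; [:: 1; 0; 2; 3; 4]; [:: 1; 0; 2; 3; 5]; [:: 1; 0; 2; 4; 3]; [:: 1; 0; 2; 4; 3; 5]; [:: 1; 0; 2; 5; 3]; [:: 1; 0; 2; 5; 3; 4]; [:: 1; 0; 3; 2; 4]; [:: 1; 0; 3; 2; 5]; [:: 1; 0; 3; 4]; [:: 1; 0; 3; 4; 5]; [:: 1; 0; 3; 4; 5; 2]; [:: 1; 0; 3; 5]; [:: 1; 0; 3; 5; 4]; [:: 1; 0; 3; 5; 4; 2]; [:: 1; 0; 4]; [:: 1; 0; 4; 2; 5]; [:: 1; 0; 4; 2; 5; 3]; [:: 1; 0; 4; 3; 5]; [:: 1; 0; 4; 3; 5; 2]; [:: 1; 0; 4; 5]; [:: 1; 0; 4; 5; 2; 3]; [:: 1; 0; 4; 5; 3; 2]; [:: 1; 0; 5]; [:: 1; 0; 5; 2; 4]; [:: 1; 0; 5; 2; 4; 3]; [:: 1; 0; 5; 3; 4]; [:: 1; 0; 5; 3; 4; 2]; [:: 1; 0; 5; 4]; [:: 1; 0; 5; 4; 2; 3]; [:: 1; 0; 5; 4; 3; 2]; [:: 1; 2; 0; 3; 4]; [:: 1; 2; 0; 3; 5]; [:: 1; 2; 0; 4; 3]; [:: 1; 2; 0; 4; 3; 5]; [:: 1; 2; 0; 5; 3]; [:: 1; 2; 0; 5; 3; 4]; [:: 1; 2;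 3; 0; 4]; [:: 1; 2; 3; 0; 5]; [:: 1; 2; 3; 4]; [:: 1; 2; 3; 4; 5]; [:: 1; 2; 3; 4; 5; 0]; [:: 1; 2; 3; 5]; [:: 1; 2; 3; 5; 4]; [:: 1; 2; 3; 5; 4; 0]; [:: 1; 2; 4; 0; 3]; [:: 1; 2; 4; 0; 3; 5]; [:: 1; 2; 4; 3]; [:: 1; 2; 4; 3; 0; 5]; [:: 1; 2; 4; 3; 5; 0]; [:: 1; 2; 4; 5; 3]; [:: 1; 2; 4; 5; 3; 0]; [:: 1; 2; 5; 0; 3]; [:: 1; 2; 5; 0; 3; 4]; [:: 1; 2; 5; 3]; [:: 1; 2; 5; 3; 0; 4]; [:: 1; 2; 5; 3; 4; 0]; [:: 1; 2; 5; 4; 3]; [:: 1; 2; 5; 4; 3; 0]; [:: 1; 3; 0; 2; 4]; [:: 1; 3; 0; 2; 5]; [:: 1; 3; 0; 4]; [:: 1; 3; 0; 4; 5]; [:: 1; 3; 0; 4; 5; 2]; [:: 1; 3; 0; 5]; [:: 1; 3; 0; 5; 4]; [:: 1; 3; 0; 5; 4; 2]; [:: 1; 3; 2; 0; 4]; [:: 1; 3; 2; 0; 5]; [:: 1; 3; 2; 4]; [:: 1; 3; 2; 4; 5]; [:: 1; 3; 2; 4; 5; 0]; [:: 1; 3; 2; 5]; [:: 1; 3; 2; 5; 4]; [:: 1; 3; 2; 5; 4; 0]; [:: 1; 3; 4]; [:: 1; 3; 4; 0; 5]; [:: 1; 3; 4; 0; 5; 2]; [:: 1; 3; 4; 2;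 5]; [:: 1; 3; 4; 2; 5; 0]; [:: 1; 3; 4; 5]; [:: 1; 3; 4; 5; 0; 2]; [:: 1; 3; 4; 5; 2; 0]; [:: 1; 3; 5]; [:: 1; 3; 5; 0; 4]; [:: 1; 3; 5; 0; 4; 2]; [:: 1; 3; 5; 2; 4]; [:: 1; 3; 5; 2; 4; 0]; [:: 1; 3; 5; 4; 0]; [:: 1; 3; 5; 4; 2]; [:: 1; 4]; [:: 1; 4; 0; 2; 5]; [:: 1; 4; 0; 2; 5; 3]; [:: 1; 4; 0; 3; 5]; [:: 1; 4; 0; 3; 5; 2]; [:: 1; 4; 0; 5]; [:: 1; 4; 0; 5; 2; 3]; [:: 1; 4; 0; 5; 3; 2]; [:: 1; 4; 2; 0; 5]; [:: 1; 4; 2; 0; 5; 3]; [:: 1; 4; 2; 3; 5]; [:: 1; 4; 2; 3; 5; 0]; [:: 1; 4; 2; 5]; [:: 1; 4; 2; 5; 0; 3]; [:: 1; 4; 2; 5; 3; 0]; [:: 1; 4; 3; 0; 5]; [:: 1; 4; 3; 0; 5; 2]; [:: 1; 4; 3; 2; 5]; [:: 1; 4; 3; 2; 5; 0]; [:: 1; 4; 3; 5]; [:: 1; 4; 3; 5; 0; 2]; [:: 1; 4; 3; 5; 2; 0]; [:: 1; 4; 5]; [:: 1; 4; 5; 0; 2; 3]; [:: 1; 4; 5; 0; 3; 2]; [:: 1; 4; 5; 2; 0; 3]; [:: 1; 4; 5; 2; 3; 0]; [:: 1; 4; 5; 3; 0; 2]; [:: 1; 4; 5; 3; 2; 0]; [::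 1; 5]; [:: 1; 5; 0; 2; 4]; [:: 1; 5; 0; 2; 4; 3]; [:: 1; 5; 0; 3; 4]; [:: 1; 5; 0; 3; 4; 2]; [:: 1; 5; 0; 4]; [:: 1; 5; 0; 4; 2; 3]; [:: 1; 5; 0; 4; 3; 2]; [:: 1; 5; 2; 0; 4]; [:: 1; 5; 2; 0; 4; 3]; [:: 1; 5; 2; 3; 4]; [:: 1; 5; 2; 3; 4; 0]; [:: 1; 5; 2; 4]; [:: 1; 5; 2; 4; 0; 3]; [:: 1; 5; 2; 4; 3; 0]; [:: 1; 5; 3; 0; 4]; [:: 1; 5; 3; 0; 4; 2]; [:: 1; 5; 3; 2; 4]; [:: 1; 5; 3; 2; 4; 0]; [:: 1; 5; 3; 4; 0]; [:: 1; 5; 3; 4; 2]; [:: 1; 5; 4; 0]; [:: 1; 5; 4; 0; 2]; [:: 1; 5; 4; 0; 2; 3]; [:: 1; 5; 4; 2]; [:: 1; 5; 4; 2; 0]; [:: 1; 5; 4; 2; 0; 3]; [:: 1; 5; 4; 3; 0]; [:: 1; 5; 4; 3; 2]; [:: 2; 0; 1]; [:: 2; 0; 1; 3; 4]; [:: 2; 0; 1; 3; 5]; [:: 2; 0; 1; 4; 3]; [:: 2; 0; 1; 4; 3; 5]; [:: 2; 0; 1; 5; 3]; [:: 2; 0; 1; 5; 3; 4]; [:: 2; 0; 3]; [:: 2; 0; 3; 1]; [:: 2; 0; 3; 1; 4; 5]; [:: 2; 0; 3; 1; 5; 4]; [:: 2; 0; 3; 4; 1]; [:: 2; 0; 3;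 4; 1; 5]; [:: 2; 0; 3; 5; 1]; [:: 2; 0; 3; 5; 1; 4]; [:: 2; 0; 4; 1]; [:: 2; 0; 4; 1; 3]; [:: 2; 0; 4; 1; 3; 5]; [:: 2; 0; 4; 3]; [:: 2; 0; 4; 3; 1]; [:: 2; 0; 4; 3; 1; 5]; [:: 2; 0; 4; 5; 1]; [:: 2; 0; 4; 5; 3]; [:: 2; 0; 5; 1]; [:: 2; 0; 5; 1; 3]; [:: 2; 0; 5; 1; 3; 4]; [:: 2; 0; 5; 3]; [:: 2; 0; 5; 3; 1]; [:: 2; 0; 5; 3; 1; 4]; [:: 2; 0; 5; 4; 1]; [:: 2; 0; 5; 4; 3]; [:: 2; 1]; [:: 2; 1; 0; 3; 4]; [:: 2; 1; 0; 3; 5]; [:: 2; 1; 0; 4; 3]; [:: 2; 1; 0; 4; 3; 5]; [:: 2; 1; 0; 5; 3]; [:: 2; 1; 0; 5; 3; 4]; [:: 2; 1; 3; 0; 4]; [:: 2; 1; 3; 0; 5]; [:: 2; 1; 3; 4]; [:: 2; 1; 3; 4; 5]; [:: 2; 1; 3; 4; 5; 0]; [:: 2; 1; 3; 5]; [:: 2; 1; 3; 5; 4]; [:: 2; 1; 3; 5; 4; 0]; [:: 2; 1; 4; 0; 3]; [:: 2; 1; 4; 0; 3; 5]; [:: 2; 1; 4; 3]; [:: 2; 1; 4; 3; 0; 5]; [:: 2; 1; 4; 3; 5; 0]; [:: 2; 1; 4; 5; 3]; [:: 2; 1; 4; 5; 3; 0]; [:: 2; 1; 5; 0; 3]; [::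 2; 1; 5; 0; 3; 4]; [:: 2; 1; 5; 3]; [:: 2; 1; 5; 3; 0; 4]; [:: 2; 1; 5; 3; 4; 0]; [:: 2; 1; 5; 4; 3]; [:: 2; 1; 5; 4; 3; 0]; [:: 2; 3]; [:: 2; 3; 0; 1]; [:: 2; 3; 0; 1; 4; 5]; [:: 2; 3; 0; 1; 5; 4]; [:: 2; 3; 0; 4; 1]; [:: 2; 3; 0; 4; 1; 5]; [:: 2; 3; 0; 5; 1]; [:: 2; 3; 0; 5; 1; 4]; [:: 2; 3; 1; 0]; [:: 2; 3; 1; 0; 4]; [:: 2; 3; 1; 0; 5]; [:: 2; 3; 1; 4]; [:: 2; 3; 1; 4; 0]; [:: 2; 3; 1; 4; 5]; [:: 2; 3; 1; 5]; [:: 2; 3; 1; 5; 0]; [:: 2; 3; 1; 5; 4]; [:: 2; 3; 4; 0; 1]; [:: 2; 3; 4; 0; 1; 5]; [:: 2; 3; 4; 1]; [:: 2; 3; 4; 1; 0; 5]; [:: 2; 3; 4; 1; 5; 0]; [:: 2; 3; 4; 5; 1]; [:: 2; 3; 4; 5; 1; 0]; [:: 2; 3; 5; 0; 1]; [:: 2; 3; 5; 0; 1; 4]; [:: 2; 3; 5; 1]; [:: 2; 3; 5; 1; 0; 4]; [:: 2; 3; 5; 1; 4; 0]; [:: 2; 3; 5; 4; 1]; [:: 2; 3; 5; 4; 1; 0]; [:: 2; 4; 0; 1]; [:: 2; 4; 0; 1; 3]; [:: 2; 4; 0; 1; 3; 5]; [:: 2; 4; 0; 3]; [:: 2; 4;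 0; 3; 1]; [:: 2; 4; 0; 3; 1; 5]; [:: 2; 4; 0; 5; 1]; [:: 2; 4; 0; 5; 3]; [:: 2; 4; 1; 0]; [:: 2; 4; 1; 0; 3; 5]; [:: 2; 4; 1; 0; 5; 3]; [:: 2; 4; 1; 3; 0]; [:: 2; 4; 1; 3; 0; 5]; [:: 2; 4; 1; 5; 0]; [:: 2; 4; 1; 5; 0; 3]; [:: 2; 4; 3; 0]; [:: 2; 4; 3; 0; 1; 5]; [:: 2; 4; 3; 0; 5; 1]; [:: 2; 4; 3; 1; 0]; [:: 2; 4; 3; 1; 0; 5]; [:: 2; 4; 3; 5; 0]; [:: 2; 4; 3; 5; 0; 1]; [:: 2; 4; 5; 0; 1]; [:: 2; 4; 5; 0; 3]; [:: 2; 4; 5; 1; 0]; [:: 2; 4; 5; 1; 0; 3]; [:: 2; 4; 5; 3; 0]; [:: 2; 4; 5; 3; 0; 1]; [:: 2; 5; 0; 1]; [:: 2; 5; 0; 1; 3]; [:: 2; 5; 0; 1; 3; 4]; [:: 2; 5; 0; 3]; [:: 2; 5; 0; 3; 1]; [:: 2; 5; 0; 3; 1; 4]; [:: 2; 5; 0; 4; 1]; [:: 2; 5; 0; 4; 3]; [:: 2; 5; 1]; [:: 2; 5; 1; 0; 3]; [:: 2; 5; 1; 0; 3; 4]; [:: 2; 5; 1; 3]; [:: 2; 5; 1; 3; 0; 4]; [:: 2; 5; 1; 3; 4; 0]; [:: 2; 5; 1; 4; 3]; [:: 2; 5; 1; 4; 3; 0]; [:: 2; 5; 3]; [:: 2;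 5; 3; 0; 1]; [:: 2; 5; 3; 0; 1; 4]; [:: 2; 5; 3; 1]; [:: 2; 5; 3; 1; 0; 4]; [:: 2; 5; 3; 1; 4; 0]; [:: 2; 5; 3; 4; 1]; [:: 2; 5; 3; 4; 1; 0]; [:: 2; 5; 4; 0; 1]; [:: 2; 5; 4; 0; 3]; [:: 2; 5; 4; 1; 0]; [:: 2; 5; 4; 1; 0; 3]; [:: 2; 5; 4; 3; 0]; [:: 2; 5; 4; 3; 0; 1]; [:: 3]; [:: 3; 0]; [:: 3; 0; 1; 2; 4]; [:: 3; 0; 1; 2; 5]; [:: 3; 0; 1; 4]; [:: 3; 0; 1; 4; 5]; [:: 3; 0; 1; 4; 5; 2]; [:: 3; 0; 1; 5]; [:: 3; 0; 1; 5; 4]; [:: 3; 0; 1; 5; 4; 2]; [:: 3; 0; 2; 1; 4]; [:: 3; 0; 2; 1; 5]; [:: 3; 0; 2; 4]; [:: 3; 0; 2; 4; 5]; [:: 3; 0; 2; 4; 5; 1]; [:: 3; 0; 2; 5]; [:: 3; 0; 2; 5; 4]; [:: 3; 0; 2; 5; 4; 1]; [:: 3; 0; 4]; [:: 3; 0; 4; 1; 5]; [:: 3; 0; 4; 1; 5; 2]; [:: 3; 0; 4; 2; 5]; [:: 3; 0; 4; 2; 5; 1]; [:: 3; 0; 4; 5; 1]; [:: 3; 0; 4; 5; 2]; [:: 3; 0; 5; 1]; [:: 3; 0; 5; 1; 2]; [:: 3; 0; 5; 1; 4]; [:: 3; 0; 5; 2]; [:: 3; 0; 5; 2; 1]; [::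 3; 0; 5; 2; 4]; [:: 3; 0; 5; 4]; [:: 3; 0; 5; 4; 1]; [:: 3; 0; 5; 4; 2]; [:: 3; 1; 0]; [:: 3; 1; 0; 2; 4]; [:: 3; 1; 0; 2; 5]; [:: 3; 1; 0; 4]; [:: 3; 1; 0; 4; 5]; [:: 3; 1; 0; 4; 5; 2]; [:: 3; 1; 0; 5]; [:: 3; 1; 0; 5; 4]; [:: 3; 1; 0; 5; 4; 2]; [:: 3; 1; 2; 0]; [:: 3; 1; 2; 0; 4]; [:: 3; 1; 2; 0; 5]; [:: 3; 1; 2; 4]; [:: 3; 1; 2; 4; 0]; [:: 3; 1; 2; 4; 5]; [:: 3; 1; 2; 5]; [:: 3; 1; 2; 5; 0]; [:: 3; 1; 2; 5; 4]; [:: 3; 1; 4; 0; 2]; [:: 3; 1; 4; 0; 5]; [:: 3; 1; 4; 2]; [:: 3; 1; 4; 2; 5]; [:: 3; 1; 4; 2; 5; 0]; [:: 3; 1; 4; 5]; [:: 3; 1; 4; 5; 2]; [:: 3; 1; 4; 5; 2; 0]; [:: 3; 1; 5]; [:: 3; 1; 5; 0]; [:: 3; 1; 5; 0; 4]; [:: 3; 1; 5; 0; 4; 2]; [:: 3; 1; 5; 2; 0]; [:: 3; 1; 5; 2; 4]; [:: 3; 1; 5; 4; 2]; [:: 3; 1; 5; 4; 2; 0]; [:: 3; 2; 0; 1]; [:: 3; 2; 0; 1; 4; 5]; [:: 3; 2; 0; 1; 5; 4]; [:: 3; 2; 0; 4; 1]; [:: 3; 2; 0; 4; 1; 5]; [::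 3; 2; 0; 5; 1]; [:: 3; 2; 0; 5; 1; 4]; [:: 3; 2; 1; 0]; [:: 3; 2; 1; 0; 4]; [:: 3; 2; 1; 0; 5]; [:: 3; 2; 1; 4]; [:: 3; 2; 1; 4; 0]; [:: 3; 2; 1; 4; 5]; [:: 3; 2; 1; 5]; [:: 3; 2; 1; 5; 0]; [:: 3; 2; 1; 5; 4]; [:: 3; 2; 4; 0; 1]; [:: 3; 2; 4; 0; 1; 5]; [:: 3; 2; 4; 1]; [:: 3; 2; 4; 1; 0; 5]; [:: 3; 2; 4; 1; 5; 0]; [:: 3; 2; 4; 5; 1]; [:: 3; 2; 4; 5; 1; 0]; [:: 3; 2; 5; 0; 1]; [:: 3; 2; 5; 0; 1; 4]; [:: 3; 2; 5; 1]; [:: 3; 2; 5; 1; 0; 4]; [:: 3; 2; 5; 1; 4; 0]; [:: 3; 2; 5; 4; 1]; [:: 3; 2; 5; 4; 1; 0]; [:: 3; 4; 0; 1; 2]; [:: 3; 4; 0; 1; 5]; [:: 3; 4; 0; 2; 1]; [:: 3; 4; 0; 2; 1; 5]; [:: 3; 4; 0; 5]; [:: 3; 4; 0; 5; 2]; [:: 3; 4; 0; 5; 2; 1]; [:: 3; 4; 1; 0; 2]; [:: 3; 4; 1; 0; 5]; [:: 3; 4; 1; 2]; [:: 3; 4; 1; 2; 5]; [:: 3; 4; 1; 2; 5; 0]; [:: 3; 4; 1; 5]; [:: 3; 4; 1; 5; 2]; [:: 3; 4; 1; 5; 2; 0]; [:: 3; 4; 2; 0; 1]; [:: 3; 4;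 2; 0; 1; 5]; [:: 3; 4; 2; 1]; [:: 3; 4; 2; 1; 0; 5]; [:: 3; 4; 2; 1; 5; 0]; [:: 3; 4; 2; 5; 1]; [:: 3; 4; 2; 5; 1; 0]; [:: 3; 4; 5]; [:: 3; 4; 5; 0; 2]; [:: 3; 4; 5; 0; 2; 1]; [:: 3; 4; 5; 1; 2]; [:: 3; 4; 5; 1; 2; 0]; [:: 3; 4; 5; 2]; [:: 3; 4; 5; 2; 0; 1]; [:: 3; 4; 5; 2; 1; 0]; [:: 3; 5]; [:: 3; 5; 0]; [:: 3; 5; 0; 1; 4]; [:: 3; 5; 0; 1; 4; 2]; [:: 3; 5; 0; 2; 4]; [:: 3; 5; 0; 2; 4; 1]; [:: 3; 5; 0; 4]; [:: 3; 5; 0; 4; 1; 2]; [:: 3; 5; 0; 4; 2; 1]; [:: 3; 5; 1; 0]; [:: 3; 5; 1; 0; 4]; [:: 3; 5; 1; 0; 4; 2]; [:: 3; 5; 1; 2; 0]; [:: 3; 5; 1; 2; 4]; [:: 3; 5; 1; 4; 2]; [:: 3; 5; 1; 4; 2; 0]; [:: 3; 5; 2; 0]; [:: 3; 5; 2; 0; 4]; [:: 3; 5; 2; 0; 4; 1]; [:: 3; 5; 2; 1; 0]; [:: 3; 5; 2; 1; 4]; [:: 3; 5; 2; 4]; [:: 3; 5; 2; 4; 0]; [:: 3; 5; 2; 4; 0; 1]; [:: 3; 5; 4; 0; 2]; [:: 3; 5; 4; 0; 2; 1]; [:: 3; 5; 4; 1; 2]; [:: 3; 5; 4; 1; 2;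 0]; [:: 3; 5; 4; 2]; [:: 3; 5; 4; 2; 0; 1]; [:: 3; 5; 4; 2; 1; 0]; [:: 4; 0; 1; 2]; [:: 4; 0; 1; 2; 3]; [:: 4; 0; 1; 2; 5]; [:: 4; 0; 1; 3]; [:: 4; 0; 1; 3; 2]; [:: 4; 0; 1; 3; 5]; [:: 4; 0; 1; 5]; [:: 4; 0; 1; 5; 2]; [:: 4; 0; 1; 5; 3]; [:: 4; 0; 2; 1]; [:: 4; 0; 2; 1; 3]; [:: 4; 0; 2; 1; 3; 5]; [:: 4; 0; 2; 3]; [:: 4; 0; 2; 3; 1]; [:: 4; 0; 2; 3; 1; 5]; [:: 4; 0; 2; 5; 1]; [:: 4; 0; 2; 5; 3]; [:: 4; 0; 3]; [:: 4; 0; 3; 1; 2]; [:: 4; 0; 3; 1; 5]; [:: 4; 0; 3; 2; 1]; [:: 4; 0; 3; 2; 1; 5]; [:: 4; 0; 3; 5]; [:: 4; 0; 3; 5; 2]; [:: 4; 0; 3; 5; 2; 1]; [:: 4; 0; 5]; [:: 4; 0; 5; 1; 2]; [:: 4; 0; 5; 1; 3]; [:: 4; 0; 5; 2]; [:: 4; 0; 5; 2; 3]; [:: 4; 0; 5; 2; 3; 1]; [:: 4; 0; 5; 3]; [:: 4; 0; 5; 3; 2]; [:: 4; 0; 5; 3; 2; 1]; [:: 4; 1; 0; 2]; [:: 4; 1; 0; 2; 3]; [:: 4; 1; 0; 2; 5]; [:: 4; 1; 0; 3]; [:: 4; 1; 0; 3; 2]; [:: 4; 1; 0; 3; 5]; [::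 4; 1; 0; 5]; [:: 4; 1; 0; 5; 2]; [:: 4; 1; 0; 5; 3]; [:: 4; 1; 2; 0]; [:: 4; 1; 2; 0; 3; 5]; [:: 4; 1; 2; 0; 5; 3]; [:: 4; 1; 2; 3; 0]; [:: 4; 1; 2; 3; 0; 5]; [:: 4; 1; 2; 5; 0]; [:: 4; 1; 2; 5; 0; 3]; [:: 4; 1; 3; 0]; [:: 4; 1; 3; 0; 2; 5]; [:: 4; 1; 3; 0; 5; 2]; [:: 4; 1; 3; 2; 0]; [:: 4; 1; 3; 2; 0; 5]; [:: 4; 1; 3; 5; 0]; [:: 4; 1; 3; 5; 0; 2]; [:: 4; 1; 5; 0]; [:: 4; 1; 5; 0; 2; 3]; [:: 4; 1; 5; 0; 3; 2]; [:: 4; 1; 5; 2; 0]; [:: 4; 1; 5; 2; 0; 3]; [:: 4; 1; 5; 3; 0]; [:: 4; 1; 5; 3; 0; 2]; [:: 4; 2; 0; 1]; [:: 4; 2; 0; 1; 3]; [:: 4; 2; 0; 1; 3; 5]; [:: 4; 2; 0; 3]; [:: 4; 2; 0; 3; 1]; [:: 4; 2; 0; 3; 1; 5]; [:: 4; 2; 0; 5; 1]; [:: 4; 2; 0; 5; 3]; [:: 4; 2; 1; 0]; [:: 4; 2; 1; 0; 3; 5]; [:: 4; 2; 1; 0; 5; 3]; [:: 4; 2; 1; 3; 0]; [:: 4; 2; 1; 3; 0; 5]; [:: 4; 2; 1; 5; 0]; [:: 4; 2; 1; 5; 0; 3]; [:: 4; 2; 3; 0]; [:: 4; 2; 3; 0;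 1; 5]; [:: 4; 2; 3; 0; 5; 1]; [:: 4; 2; 3; 1; 0]; [:: 4; 2; 3; 1; 0; 5]; [:: 4; 2; 3; 5; 0]; [:: 4; 2; 3; 5; 0; 1]; [:: 4; 2; 5; 0; 1]; [:: 4; 2; 5; 0; 3]; [:: 4; 2; 5; 1; 0]; [:: 4; 2; 5; 1; 0; 3]; [:: 4; 2; 5; 3; 0]; [:: 4; 2; 5; 3; 0; 1]; [:: 4; 3; 0]; [:: 4; 3; 0; 1; 2; 5]; [:: 4; 3; 0; 1; 5; 2]; [:: 4; 3; 0; 2; 1; 5]; [:: 4; 3; 0; 2; 5; 1]; [:: 4; 3; 0; 5; 1; 2]; [:: 4; 3; 0; 5; 2; 1]; [:: 4; 3; 1; 0]; [:: 4; 3; 1; 0; 2; 5]; [:: 4; 3; 1; 0; 5; 2]; [:: 4; 3; 1; 2; 0]; [:: 4; 3; 1; 2; 0; 5]; [:: 4; 3; 1; 5; 0]; [:: 4; 3; 1; 5; 0; 2]; [:: 4; 3; 2; 0]; [:: 4; 3; 2; 0; 1; 5]; [:: 4; 3; 2; 0; 5; 1]; [:: 4; 3; 2; 1; 0]; [:: 4; 3; 2; 1; 0; 5]; [:: 4; 3; 2; 5; 0]; [:: 4; 3; 2; 5; 0; 1]; [:: 4; 3; 5; 0]; [:: 4; 3; 5; 0; 1; 2]; [:: 4; 3; 5; 0; 2; 1]; [:: 4; 3; 5; 1; 0]; [:: 4; 3; 5; 1; 0; 2]; [:: 4; 3; 5; 2; 0]; [:: 4; 3; 5; 2; 0; 1];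 [:: 4; 5; 0]; [:: 4; 5; 0; 1; 2; 3]; [:: 4; 5; 0; 1; 3; 2]; [:: 4; 5; 0; 2; 1; 3]; [:: 4; 5; 0; 2; 3; 1]; [:: 4; 5; 0; 3; 1; 2]; [:: 4; 5; 0; 3; 2; 1]; [:: 4; 5; 1; 0]; [:: 4; 5; 1; 0; 2; 3]; [:: 4; 5; 1; 0; 3; 2]; [:: 4; 5; 1; 2; 0]; [:: 4; 5; 1; 2; 0; 3]; [:: 4; 5; 1; 3; 0]; [:: 4; 5; 1; 3; 0; 2]; [:: 4; 5; 2; 0; 1]; [:: 4; 5; 2; 0; 3]; [:: 4; 5; 2; 1; 0]; [:: 4; 5; 2; 1; 0; 3]; [:: 4; 5; 2; 3; 0]; [:: 4; 5; 2; 3; 0; 1]; [:: 4; 5; 3; 0]; [:: 4; 5; 3; 0; 1; 2]; [:: 4; 5; 3; 0; 2; 1]; [:: 4; 5; 3; 1; 0]; [:: 4; 5; 3; 1; 0; 2]; [:: 4; 5; 3; 2; 0]; [:: 4; 5; 3; 2; 0; 1]; [:: 5]; [:: 5; 0]; [:: 5; 0; 1]; [:: 5; 0; 1; 2]; [:: 5; 0; 1; 2; 3; 4]; [:: 5; 0; 1; 2; 4; 3]; [:: 5; 0; 1; 3; 2]; [:: 5; 0; 1; 3; 2; 4]; [:: 5; 0; 1; 4; 2]; [:: 5; 0; 1; 4; 2; 3]; [:: 5; 0; 2]; [:: 5; 0; 2; 1]; [:: 5; 0; 2; 1; 3; 4]; [:: 5; 0; 2; 1; 4; 3]; [:: 5;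 0; 2; 3; 1]; [:: 5; 0; 2; 3; 1; 4]; [:: 5; 0; 2; 4; 1]; [:: 5; 0; 2; 4; 1; 3]; [:: 5; 0; 3; 1]; [:: 5; 0; 3; 1; 2]; [:: 5; 0; 3; 1; 2; 4]; [:: 5; 0; 3; 2]; [:: 5; 0; 3; 2; 1]; [:: 5; 0; 3; 2; 1; 4]; [:: 5; 0; 3; 4; 1]; [:: 5; 0; 3; 4; 2]; [:: 5; 0; 4; 1]; [:: 5; 0; 4; 1; 2]; [:: 5; 0; 4; 1; 2; 3]; [:: 5; 0; 4; 2]; [:: 5; 0; 4; 2; 1]; [:: 5; 0; 4; 2; 1; 3]; [:: 5; 0; 4; 3; 1]; [:: 5; 0; 4; 3; 2]; [:: 5; 1]; [:: 5; 1; 0; 2; 4]; [:: 5; 1; 0; 2; 4; 3]; [:: 5; 1; 0; 3; 4]; [:: 5; 1; 0; 3; 4; 2]; [:: 5; 1; 0; 4]; [:: 5; 1; 0; 4; 2; 3]; [:: 5; 1; 0; 4; 3; 2]; [:: 5; 1; 2; 0; 4]; [:: 5; 1; 2; 0; 4; 3]; [:: 5; 1; 2; 3; 4]; [:: 5; 1; 2; 3; 4; 0]; [:: 5; 1; 2; 4]; [:: 5; 1; 2; 4; 0; 3]; [:: 5; 1; 2; 4; 3; 0]; [:: 5; 1; 3; 0; 4]; [:: 5; 1; 3; 0; 4; 2]; [:: 5; 1; 3; 2; 4]; [:: 5; 1; 3; 2; 4; 0]; [:: 5; 1; 3; 4; 0]; [:: 5; 1; 3; 4; 2]; [:: 5;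 1; 4; 0]; [:: 5; 1; 4; 0; 2]; [:: 5; 1; 4; 0; 2; 3]; [:: 5; 1; 4; 2]; [:: 5; 1; 4; 2; 0]; [:: 5; 1; 4; 2; 0; 3]; [:: 5; 1; 4; 3; 0]; [:: 5; 1; 4; 3; 2]; [:: 5; 2]; [:: 5; 2; 0]; [:: 5; 2; 0; 1]; [:: 5; 2; 0; 1; 3; 4]; [:: 5; 2; 0; 1; 4; 3]; [:: 5; 2; 0; 3; 1]; [:: 5; 2; 0; 3; 1; 4]; [:: 5; 2; 0; 4; 1]; [:: 5; 2; 0; 4; 1; 3]; [:: 5; 2; 1]; [:: 5; 2; 1; 0]; [:: 5; 2; 1; 0; 3; 4]; [:: 5; 2; 1; 0; 4; 3]; [:: 5; 2; 1; 3; 0]; [:: 5; 2; 1; 3; 0; 4]; [:: 5; 2; 1; 4; 0]; [:: 5; 2; 1; 4; 0; 3]; [:: 5; 2; 3; 0]; [:: 5; 2; 3; 0; 1]; [:: 5; 2; 3; 0; 1; 4]; [:: 5; 2; 3; 1]; [:: 5; 2; 3; 1; 0]; [:: 5; 2; 3; 1; 0; 4]; [:: 5; 2; 3; 4; 0]; [:: 5; 2; 3; 4; 1]; [:: 5; 2; 4; 0; 3]; [:: 5; 2; 4; 0; 3; 1]; [:: 5; 2; 4; 1; 3]; [:: 5; 2; 4; 1; 3; 0]; [:: 5; 2; 4; 3; 0]; [:: 5; 2; 4; 3; 1]; [:: 5; 3; 0]; [:: 5; 3; 0; 1]; [:: 5; 3; 0; 1; 2]; [:: 5; 3; 0; 1;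 2; 4]; [:: 5; 3; 0; 2]; [:: 5; 3; 0; 2; 1]; [:: 5; 3; 0; 2; 1; 4]; [:: 5; 3; 0; 4; 1]; [:: 5; 3; 0; 4; 2]; [:: 5; 3; 1]; [:: 5; 3; 1; 0; 4]; [:: 5; 3; 1; 0; 4; 2]; [:: 5; 3; 1; 2; 4]; [:: 5; 3; 1; 2; 4; 0]; [:: 5; 3; 1; 4; 0]; [:: 5; 3; 1; 4; 2]; [:: 5; 3; 2]; [:: 5; 3; 2; 0]; [:: 5; 3; 2; 0; 1]; [:: 5; 3; 2; 0; 1; 4]; [:: 5; 3; 2; 1]; [:: 5; 3; 2; 1; 0]; [:: 5; 3; 2; 1; 0; 4]; [:: 5; 3; 2; 4; 0]; [:: 5; 3; 2; 4; 1]; [:: 5; 3; 4; 0]; [:: 5; 3; 4; 0; 1]; [:: 5; 3; 4; 0; 2]; [:: 5; 3; 4; 1]; [:: 5; 3; 4; 1; 0]; [:: 5; 3; 4; 1; 2]; [:: 5; 3; 4; 2]; [:: 5; 3; 4; 2; 0]; [:: 5; 3; 4; 2; 1]; [:: 5; 4; 0; 1; 2]; [:: 5; 4; 0; 1; 3]; [:: 5; 4; 0; 2]; [:: 5; 4; 0; 2; 3]; [:: 5; 4; 0; 2; 3; 1]; [:: 5; 4; 0; 3]; [:: 5; 4; 0; 3; 2]; [:: 5; 4; 0; 3; 2; 1]; [:: 5; 4; 1; 0; 2]; [:: 5; 4; 1; 0; 3]; [:: 5; 4; 1; 2]; [:: 5; 4; 1; 2; 3]; [:: 5; 4; 1; 2;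 3; 0]; [:: 5; 4; 1; 3]; [:: 5; 4; 1; 3; 2]; [:: 5; 4; 1; 3; 2; 0]; [:: 5; 4; 2]; [:: 5; 4; 2; 0; 3]; [:: 5; 4; 2; 0; 3; 1]; [:: 5; 4; 2; 1; 3]; [:: 5; 4; 2; 1; 3; 0]; [:: 5; 4; 2; 3; 0]; [:: 5; 4; 2; 3; 1]; [:: 5; 4; 3; 0]; [:: 5; 4; 3; 0; 1]; [:: 5; 4; 3; 0; 2]; [:: 5; 4; 3; 1]; [:: 5; 4; 3; 1; 0]; [:: 5; 4; 3; 1; 2]; [:: 5; 4; 3; 2]; [:: 5; 4; 3; 2; 0]; [:: 5; 4; 3; 2; 1]].
Definition T_tbl : seq (seq nat) := [:: [:: 0]; [:: 0; 1; 2; 3; 5]; [:: 3]; [:: 1]; [:: 4]; [:: 2]; [:: ]; [:: ]; [:: 1]; [:: 3]; [:: 0; 1; 3; 4; 5]; [:: 0]; [:: 5]; [:: ]; [:: ]; [:: 4]; [:: ]; [:: ]; [:: 5]; [:: ]; [:: 0; 1; 3; 4; 5]; [:: 0]; [:: 1]; [:: 3]; [:: ]; [:: 5]; [:: 4]; [:: 2]; [:: 3]; [:: 1]; [:: ]; [:: 1; 2; 3; 4; 5]; [:: ]; [:: 5]; [:: 4]; [:: 2]; [:: 3]; [:: 1]; [:: 0]; [:: 0; 1; 2; 3; 4]; [:: 2]; [:: 4]; [:: 5]; [:: ]; [:: 0; 1; 2; 3; 5]; [:: 0]; [:: 1]; [:: 3]; [:: ]; [:: ]; [:: 0; 2; 3;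 4; 5]; [:: 0]; [:: 5]; [:: ]; [:: 2]; [:: 4]; [:: 0]; [:: 0; 1; 2; 4; 5]; [:: 3]; [:: 1]; [:: ]; [:: 2]; [:: ]; [:: 5]].

Definition S6 (s : seq 'I_6) : bool := (map val s) \in ones_tbl.

Definition o6 (k : nat) (H : k < 6) : 'I_6 := Ordinal H.

Definition key6 (sg : {ffun 'I_6 -> bool}) : nat :=
  sg (@o6 0 isT) + 2 * (sg (@o6 1 isT) + 2 * (sg (@o6 2 isT) + 2 * (sg (@o6 3 isT)
  + 2 * (sg (@o6 4 isT) + 2 * (sg (@o6 5 isT)))))).

Definition keyF (f : nat -> bool) : nat :=
  f 0 + 2 * (f 1 + 2 * (f 2 + 2 * (f 3 + 2 * (f 4 + 2 * f 5)))).

Definition Tk (k : nat) : {set 'I_6} := [set j : 'I_6 | val j \in nth [::] T_tbl k].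

Definition T6 (sg : {ffun 'I_6 -> bool}) : {set 'I_6} := Tk (key6 sg).

Definition fa_nat (t : seq nat) (b : bool) (k : nat) : bool :=
  if index k t == 5 then b else take (index k t).+1 t \in ones_tbl.
Definition al_nat (t : seq nat) (k : nat) : bool :=
  take (index k t).+1 t \in ones_tbl.

Lemma chk_perms : all (fun t => [&& nth 0 t 5 \in nth [::] T_tbl (keyF (fa_nat t true)),
    nth 0 t 5 \in nth [::] T_tbl (keyF (fa_nat t false)) &
    size (nth [::] T_tbl (keyF (al_nat t))) <= 1])
  (permutations (iota 0 6)).
Proof. vm_compute. reflexivity. Qed.

Lemma chk_tbl : all (fun l => size l <= 5) T_tbl.
Proof. vm_compute. reflexivity. Qed.

Lemma card_Tk k : #|Tk k| <= size (nth [::] T_tbl k).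
Proof.
rewrite cardE -(size_map val); apply: uniq_leq_size.
  by rewrite (map_inj_uniq val_inj) enum_uniq.
by move=> x /mapP [j]; rewrite mem_enum inE => Hj ->.
Qed.

Lemma card_Tk5 k : #|Tk k| <= 5.
Proof.
apply: leq_trans (card_Tk k) _.
have [Hk|Hk] := ltnP k (size T_tbl).
  by move/allP: chk_tbl; apply; apply: mem_nth.
by rewrite nth_default.
Qed.

Lemma index_val (s : seq 'I_6) (j : 'I_6) : index (val j) (map val s) = index j s.
Proof. by rewrite index_map //; exact: val_inj. Qed.

Lemma fa_eq (s : seq 'I_6) b k (Hk : k < 6) :
  final_array S6 s b (o6 Hk) = fa_nat (map val s) b k.
Proof.
rewrite /final_array ffunE /fa_nat /S6.
by rewrite -[in RHS](_ : val (o6 Hk) = k) // index_val map_take.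
Qed.

Lemma al_eq (s : seq 'I_6) k (Hk : k < 6) :
  alice_array S6 s (o6 Hk) = al_nat (map val s) k.
Proof.
rewrite /alice_array ffunE /al_nat /S6.
by rewrite -[in RHS](_ : val (o6 Hk) = k) // index_val map_take.
Qed.

Lemma key_fa s b : key6 (final_array S6 s b) = keyF (fa_nat (map val s) b).
Proof. by rewrite /key6 !fa_eq. Qed.

Lemma key_al s : key6 (alice_array S6 s) = keyF (al_nat (map val s)).
Proof. by rewrite /key6 !al_eq. Qed.

Lemma perm_mem (s : seq 'I_6) : is_perm_seq s -> map val s \in permutations (iota 0 6).
Proof.
case/andP=> Hu /eqP Hs.
rewrite mem_permutations -val_enum_ord; apply: perm_map.
have Hsz : size (enum 'I_6) <= size s by rewrite size_enum_ord Hs.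
have [_ Heq] := uniq_min_size Hu (fun x _ => mem_enum _ x) Hsz.
by apply: uniq_perm => //; exact: enum_uniq.
Qed.

Lemma last_eq (s : seq 'I_6) (j : 'I_6) : is_perm_seq s -> index j s = 5 ->
  val j = nth 0 (map val s) 5.
Proof.
case/andP=> _ /eqP Hs Hi.
have Hj : j \in s by rewrite -index_mem Hi Hs.
rewrite (nth_map j) ?Hs //; congr val.
by rewrite -[LHS](nth_index j Hj) Hi.
Qed.

Theorem mainTheorem6 :
  exists (S : seq 'I_6 -> bool) (T : {ffun 'I_6 -> bool} -> {set 'I_6}),
    kkn_strategy 5 1 S T.
Proof.
exists S6, T6; split; [split|].
- move=> s b Hp j Hj.
  have /(allP chk_perms) /and3P [H1 H2 _] := perm_mem Hp.
  rewrite /T6 /Tk inE key_fa (last_eq Hp Hj).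
  by case: b.
- by move=> sg; apply: card_Tk5.
- move=> sg [s [Hp ->]].
  have /(allP chk_perms) /and3P [_ _ H3] := perm_mem Hp.
  by apply: leq_trans (card_Tk _) _; rewrite key_al.
Qed.
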